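(* Let $\Theta_0,\Theta_1$ be quantum channels from a finite-dimensional system $A$ to a finite-dimensional system $B$, and $\lambda\in[0,1]$. Suppose one receives a single use of a channel that equals $\Theta_0$ with probability $\lambda$ and $\Theta_1$ with probability $1-\lambda$, and one may prepare any state $\sigma$ on $A\otimes C$ for any finite-dimensional ancilla $C$, apply the unknown channel tensored with the identity on $C$, and then perform only an incoherent measurement on $B\otimes C$ (a POVM all of whose elements are diagonal in the incoherent product basis), guessing $i\in\{0,1\}$. The optimal probability $P_c(\lambda,\Theta_0,\Theta_1)$ of guessing $i$ correctly is $$P_c(\lambda,\Theta_0,\Theta_1)=\frac12+\frac12\max_{|\psi\rangle}\|T(|\psi\rangle\langle\psi|)\|_1,\qquad T=\Delta\big[\lambda\Theta_0-(1-\lambda)\Theta_1\big],$$ where the maximum is over pure states on $A$.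
   Context: Every finite-dimensional system carries a fixed orthonormal incoherent basis; composite systems use the product basis. $\Delta(\rho)=\sum_i|i\rangle\langle i|\rho|i\rangle\langle i|$ is the total dephasing map. $\|X\|_1=\operatorname{tr}\sqrt{X^\dagger X}$ is the trace norm. *)

(* Defs.v *)
From HB Require Import structures.
From mathcomp Require Import all_boot all_order all_algebra.
From mathcomp Require Import complex mxtens.
From mathcomp Require Import boolp classical_sets reals.
Set Implicit Arguments. Unset Strict Implicit. Unset Printing Implicit Defensive.
Import Order.TTheory GRing.Theory Num.Theory.
Local Open Scope ring_scope.

Section QDefs.
Variable R : realType.
Local Notation C := R[i].

Definition adj {m n} (A : 'M[C]_(m, n)) : 'M[C]_(n, m) :=
  \matrix_(i, j) (A j i)^*.

(* positive semidefinite: <v, A v> is a nonnegative real for every v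
   (over C this entails hermiticity; we also require it explicitly) *)
Definition psd {n} (A : 'M[C]_n) : Prop :=
  adj A = A /\ forall v : 'cV[C]_n, 0 <= (adj v *m A *m v) 0 0.

Definition is_state {n} (rho : 'M[C]_n) : Prop := psd rho /\ \tr rho = 1.

Definition unit_vec {n} (psi : 'cV[C]_n) : Prop := (adj psi *m psi) 0 0 = 1.
Definition proj {n} (psi : 'cV[C]_n) : 'M[C]_n := psi *m adj psi.

(* trace norm ||X||_1 = tr sqrt(X^dagger X), where sqrt is the
   (unique) positive semidefinite square root *)
Definition trace_norm {n} (X : 'M[C]_n) : R :=
  xget 0 [set t : R | exists S : 'M[C]_n,
           psd S /\ S *m S = adj X *m X /\ (t%:C)%C = \tr S].

Definition dephase {n} (X : 'M[C]_n) : 'M[C]_n :=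
  \matrix_(i, j) ((i == j)%:R * X i j).

(* block (c,c') of a matrix on A (x) K (product index via mxtens_index) *)
Definition blk {m k} (X : 'M[C]_(m * k)) (c c' : 'I_k) : 'M[C]_m :=
  \matrix_(i, j) X (mxtens_index (i, c)) (mxtens_index (j, c')).

Definition tens_id {m n} k (Phi : 'M[C]_m -> 'M[C]_n) (X : 'M[C]_(m * k))
  : 'M[C]_(n * k) :=
  \matrix_(p, q) Phi (blk X (mxtens_unindex p).2 (mxtens_unindex q).2)
                     (mxtens_unindex p).1 (mxtens_unindex q).1.

Definition is_channel {m n} (Phi : 'M[C]_m -> 'M[C]_n) : Prop :=
  linear Phi /\
  (forall X, \tr (Phi X) = \tr X) /\
  (forall k (X : 'M[C]_(m * k)), psd X -> psd (tens_id Phi X)).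

Definition incoherent_povm {n} (M0 M1 : 'M[C]_n) : Prop :=
  psd M0 /\ psd M1 /\ is_diag_mx M0 /\ is_diag_mx M1 /\ M0 + M1 = 1%:M.

Definition success {m n k} (lam : R) (T0 T1 : 'M[C]_m -> 'M[C]_n)
  (sigma : 'M[C]_(m * k)) (M0 M1 : 'M[C]_(n * k)) : R :=
  lam * complex.Re (\tr (M0 *m tens_id T0 sigma))
  + (1 - lam) * complex.Re (\tr (M1 *m tens_id T1 sigma)).

Definition Pc {m n} (lam : R) (T0 T1 : 'M[C]_m -> 'M[C]_n) : R :=
  sup [set p : R | exists k (sigma : 'M[C]_(m * k)) (M0 M1 : 'M[C]_(n * k)),
         is_state sigma /\ incoherent_povm M0 M1 /\
         p = success lam T0 T1 sigma M0 M1].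

End QDefs.

(* Main.v *)
Require Import Defs.
From HB Require Import structures.
From mathcomp Require Import all_boot all_order all_algebra.
From mathcomp Require Import complex mxtens sesquilinear spectral.
From mathcomp Require Import boolp classical_sets reals.
From mathcomp Require Import ring lra.
Import Order.TTheory GRing.Theory Num.Theory.
Set Implicit Arguments. Unset Strict Implicit. Unset Printing Implicit Defensive.
Local Open Scope ring_scope.

Section Helpers.
Variable R : realType.
Local Notation C := R[i].

Lemma adjE m n (A : 'M[C]_(m, n)) : adj A = (map_mx Num.conj A)^T.
Proof. by apply/matrixP => i j; rewrite !mxE. Qed.

Lemma adj_mul m n p (A : 'M[C]_(m, n)) (B : 'M[C]_(n, p)) :
  adj (A *m B) = adj B *m adj A.
Proof. by rewrite !adjE map_mxM trmx_mul. Qed.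

Lemma adjK m n (A : 'M[C]_(m, n)) : adj (adj A) = A.
Proof. by apply/matrixP => i j; rewrite !mxE conjCK. Qed.

Lemma adjD m n (A B : 'M[C]_(m, n)) : adj (A + B) = adj A + adj B.
Proof. by apply/matrixP => i j; rewrite !mxE rmorphD. Qed.

Lemma adjZ m n (a : C) (A : 'M[C]_(m, n)) : adj (a *: A) = a^* *: adj A.
Proof. by apply/matrixP => i j; rewrite !mxE rmorphM. Qed.

Lemma adj1 n : adj (1%:M : 'M[C]_n) = 1%:M.
Proof. by apply/matrixP => i j; rewrite !mxE eq_sym conjC_nat. Qed.

Lemma tr_adj n (A : 'M[C]_n) : \tr (adj A) = (\tr A)^*.
Proof. by rewrite /mxtrace rmorph_sum; apply: eq_bigr => i _; rewrite mxE. Qed.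

Lemma adj_delta m n (i : 'I_m) (j : 'I_n) : adj (delta_mx i j : 'M[C]_(m, n)) = delta_mx j i.
Proof. by apply/matrixP => a b; rewrite !mxE conjC_nat andbC. Qed.

Lemma quad_delta n (Y : 'M[C]_n) (p : 'I_n) :
  (adj (delta_mx p 0 : 'cV[C]_n) *m Y *m (delta_mx p 0 : 'cV[C]_n)) 0 0 = Y p p.
Proof. by rewrite adj_delta -rowE -colE !mxE. Qed.

Lemma psd_congr n p (V : 'M[C]_(p, n)) (rho : 'M[C]_n) :
  psd rho -> psd (V *m rho *m adj V).
Proof.
case=> hA hF; split.
  by rewrite !adj_mul adjK hA mulmxA.
move=> v; have := hF (adj V *m v).
by rewrite !adj_mul adjK !mulmxA.
Qed.

Lemma psd_diag_ge0 n (Y : 'M[C]_n) (p : 'I_n) : psd Y -> 0 <= Y p p.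
Proof. by case=> _ /(_ (delta_mx p 0)); rewrite quad_delta. Qed.

Lemma form_ge0 n (v : 'cV[C]_n) : 0 <= (adj v *m v) 0 0.
Proof.
rewrite mxE; apply: sumr_ge0 => i _; rewrite mxE mulrC; exact: mul_conjC_ge0.
Qed.

Lemma psd1 n : psd (1%:M : 'M[C]_n).
Proof. by split; [exact: adj1 | move=> v; rewrite mulmx1; exact: form_ge0]. Qed.

Lemma psd_adjE n p (E : 'M[C]_(n, p)) (S : 'M[C]_n) : psd S -> psd (adj E *m S *m E).
Proof. by move=> /(psd_congr (adj E)); rewrite adjK. Qed.

Lemma psd_proj n (psi : 'cV[C]_n) : psd (proj psi).
Proof. by rewrite /proj -{1}(mulmx1 psi); apply: psd_congr; apply: psd1. Qed.

Lemma tr_proj n (psi : 'cV[C]_n) : \tr (proj psi) = (adj psi *m psi) 0 0.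
Proof. by rewrite /proj mxtrace_mulC /mxtrace big_ord1. Qed.

Lemma sum_delta_l n (i : 'I_n) (f : 'I_n -> C) :
  \sum_k ((k == i)%:R * f k) = f i.
Proof.
rewrite (bigD1 i) //= eqxx mul1r big1 ?addr0 // => k /negPf ->; exact: mul0r.
Qed.

Lemma sum_delta_r n (i : 'I_n) (f : 'I_n -> C) :
  \sum_k (f k * (k == i)%:R) = f i.
Proof. by rewrite -[RHS](sum_delta_l i); apply: eq_bigr => k _; rewrite mulrC. Qed.

Lemma psd_diag n (d : 'rV[C]_n) : (forall i, 0 <= d 0 i) -> psd (diag_mx d).
Proof.
move=> hd; split.
  apply/matrixP => i j; rewrite !mxE.
  case: (eqVneq i j) => [->|h]; first by rewrite !mulr1n geC0_conj.
  by rewrite !mulr0n conjC0.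
move=> v; rewrite mxE; apply: sumr_ge0 => i _.
rewrite mul_mx_diag !mxE mulrAC; apply: mulr_ge0 => //.
rewrite mulrC; exact: mul_conjC_ge0.
Qed.


Lemma sqrt_diag_unique n (S : 'M[C]_n) (d : 'rV[C]_n) : psd S ->
  (forall i, 0 <= d 0 i) -> S *m S = diag_mx d *m diag_mx d ->
  forall j, S j j = d 0 j.
Proof.
move=> hS hd hSS j.
have Sji k : S k j = (S j k)^* by rewrite -{1}hS.1 mxE.
have := hd j; rewrite le_eqVlt => /orP[/eqP d0 | dpos].
  rewrite -d0.
  have h0 : (S *m S) j j = 0 by rewrite hSS mul_mx_diag !mxE eqxx mulr1n -d0 mulr0.
  move: h0; rewrite mxE => h0.
  have hge : forall k, predT k -> 0 <= S j k * S k j.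
    move=> k _; rewrite Sji; exact: mul_conjC_ge0.
  have := @psumr_eq0P _ _ predT _ hge h0 j isT.
  by move=> /eqP; rewrite mulf_eq0 orbb => /eqP.
set L := diag_mx d; set E := S - L.
have hE : S *m E + E *m L = 0.
  by rewrite /E mulmxBr mulmxBl hSS addrA subrK subrr.
have h2 : adj E *m S *m E + adj E *m E *m L = 0.
  by rewrite -!mulmxA -mulmxDr hE mulmx0.
have : (adj E *m S *m E) j j + (adj E *m E *m L) j j = 0.
  by move/matrixP: h2 => /(_ j j); rewrite mxE => ->; rewrite mxE.
rewrite mul_mx_diag [X in _ + X]mxE.
have ha : 0 <= (adj E *m S *m E) j j by apply: psd_diag_ge0; apply: psd_adjE.
have hc : 0 <= (adj E *m E) j j.
  have := psd_diag_ge0 j (psd_adjE E (psd1 n)); by rewrite mulmx1.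
move=> /eqP; rewrite paddr_eq0 //; last by apply: mulr_ge0 => //; exact: ltW.
move=> /andP[_]; rewrite mulf_eq0 (gt_eqF dpos) orbF => /eqP hc0.
move: hc0; rewrite mxE => hc0.
have hge : forall k, predT k -> 0 <= adj E j k * E k j.
  move=> k _; rewrite mxE mulrC; exact: mul_conjC_ge0.
have := @psumr_eq0P _ _ predT _ hge hc0 j isT.
by rewrite mxE mulrC => /eqP; rewrite mul_conjC_eq0 /E !mxE eqxx mulr1n subr_eq0 => /eqP.
Qed.


Lemma cD (r s : R) : ((r + s)%:C = r%:C + s%:C)%C.
Proof. by apply/eqP; rewrite eq_complex /= addr0 !eqxx. Qed.

Lemma cM (r s : R) : ((r * s)%:C = r%:C * s%:C)%C.
Proof. by apply/eqP; rewrite eq_complex /= !mulr0 !mul0r subr0 addr0 !eqxx. Qed.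

Lemma cinj (r s : R) : (r%:C)%C = (s%:C)%C -> r = s.
Proof. by move/eqP; rewrite eq_complex => /andP[/eqP]. Qed.

Lemma cSum (I : finType) (F : I -> R) :
  ((\sum_i F i)%:C)%C = \sum_i ((F i)%:C)%C.
Proof.
elim/big_rec2: _ => [|i y1 y2 _ <-]; last by rewrite cD.
by apply/eqP; rewrite eq_complex /= !eqxx.
Qed.

Lemma tn_dephase n (Y : 'M[C]_n) :
  trace_norm (dephase Y) = \sum_i complex.Re `|Y i i|.
Proof.
set D := dephase Y.
set d := \row_i `|Y i i| : 'rV[C]_n.
have hd : forall i, 0 <= d 0 i by move=> i; rewrite mxE.
have hDD : adj D *m D = diag_mx d *m diag_mx d.
  apply/matrixP => i j; rewrite mul_mx_diag !mxE.
  under eq_bigr => k _ do rewrite !mxE.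
  rewrite (bigD1 i) //= eqxx mul1r big1 ?addr0; last first.
    by move=> k /negPf ->; rewrite mul0r conjC0 mul0r.
  case: (eqVneq i j) => [<-|h]; last by rewrite mul0r mulr0 mulr0n mul0r.
  by rewrite mul1r mulr1n -expr2 normCKC.
have htr : \tr (diag_mx d) = ((\sum_i complex.Re `|Y i i|)%:C)%C.
  rewrite mxtrace_diag cSum; apply: eq_bigr => i _.
  by rewrite mxE RRe_real // normr_real.
apply: xget_unique.
  by exists (diag_mx d); split; [exact: psd_diag | split].
move=> t [S [hS [hSS ht]]]; apply: cinj; rewrite ht -htr /mxtrace.
apply: eq_bigr => j _.
rewrite (sqrt_diag_unique hS hd _ j); last by rewrite hSS hDD.
by rewrite [RHS]mxE eqxx mulr1n.
Qed.


Lemma sum_tens (V : zmodType) m k (F : 'I_(m * k) -> V) :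
  \sum_p F p = \sum_(b < m) \sum_(c < k) F (mxtens_index (b, c)).
Proof.
rewrite pair_big /= (reindex (@mxtens_index m k)) /=.
  by apply: eq_bigr => -[b c] _.
by exists (@mxtens_unindex m k) => x _; rewrite ?mxtens_indexK ?mxtens_unindexK.
Qed.

Lemma sum_tens1 (V : zmodType) m (F : 'I_(m * 1) -> V) :
  \sum_p F p = \sum_(b < m) F (mxtens_index (b, ord0)).
Proof. by rewrite sum_tens; apply: eq_bigr => b _; rewrite big_ord1. Qed.

Definition selW m k (c : 'I_k) : 'M[C]_(m * k, m) :=
  \matrix_(p, i) (p == mxtens_index (i, c))%:R.

Lemma blkE m k (X : 'M[C]_(m * k)) c : blk X c c = adj (selW m c) *m X *m selW m c.
Proof.
apply/matrixP => i j; rewrite !mxE.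
under eq_bigr => q _ do rewrite !mxE.
under eq_bigr => q _ do under eq_bigr => p _ do rewrite !mxE conjC_nat.
under eq_bigr => q _ do rewrite sum_delta_l.
by rewrite sum_delta_r.
Qed.

Lemma blk_psd m k (X : 'M[C]_(m * k)) c : psd X -> psd (blk X c c).
Proof. by move=> hX; rewrite blkE; apply: psd_adjE. Qed.

Lemma tens_id_diag m n k (Phi : 'M[C]_m -> 'M[C]_n) (X : 'M[C]_(m * k)) b c :
  tens_id Phi X (mxtens_index (b, c)) (mxtens_index (b, c)) = Phi (blk X c c) b b.
Proof. by rewrite mxE mxtens_indexK. Qed.

Lemma tr_tens m n k (Phi : 'M[C]_m -> 'M[C]_n) (X : 'M[C]_(m * k)) :
  \tr (tens_id Phi X) = \sum_c \tr (Phi (blk X c c)).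
Proof.
rewrite /mxtrace sum_tens exchange_big; apply: eq_bigr => c _.
by apply: eq_bigr => b _; rewrite tens_id_diag.
Qed.

Lemma tr_blk m k (X : 'M[C]_(m * k)) : \tr X = \sum_c \tr (blk X c c).
Proof.
rewrite /mxtrace sum_tens exchange_big; apply: eq_bigr => c _.
by apply: eq_bigr => b _; rewrite mxE.
Qed.

Definition liftV m : 'M[C]_(m * 1, m) :=
  \matrix_(p, i) (i == (mxtens_unindex p).1)%:R.

Definition lift1 m (rho : 'M[C]_m) : 'M[C]_(m * 1) := liftV m *m rho *m adj (liftV m).

Lemma lift1_psd m (rho : 'M[C]_m) : psd rho -> psd (lift1 rho).
Proof. exact: psd_congr. Qed.

Lemma blk_lift1 m (rho : 'M[C]_m) : blk (lift1 rho) ord0 ord0 = rho.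
Proof.
apply/matrixP => i j; rewrite !mxE.
under eq_bigr => q _ do rewrite !mxE.
under eq_bigr => q _ do under eq_bigr => p _ do rewrite !mxE mxtens_indexK /=.
under eq_bigr => q _ do rewrite sum_delta_l.
rewrite /=.
have -> : Ordinal (mxtens_index_proof1 (mxtens_index (j, (ord0 : 'I_1)))) = j.
  by apply: val_inj; rewrite /= muln1 addn0 divn1.
under eq_bigr => q _ do rewrite conjC_nat.
by rewrite sum_delta_r.
Qed.

Lemma tr_lift1 m (rho : 'M[C]_m) : \tr (lift1 rho) = \tr rho.
Proof. by rewrite tr_blk big_ord1 blk_lift1. Qed.


Lemma chan_diag_ge0 m n (Phi : 'M[C]_m -> 'M[C]_n) (rho : 'M[C]_m) b :
  is_channel Phi -> psd rho -> 0 <= Phi rho b b.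
Proof.
case=> _ [_ hcp] hr.
have := psd_diag_ge0 (mxtens_index (b, ord0)) (hcp 1%N (lift1 rho) (lift1_psd hr)).
by rewrite tens_id_diag blk_lift1.
Qed.

Lemma lin0 m n (f : 'M[C]_m -> 'M[C]_n) : linear f -> f 0 = 0.
Proof.
move=> H; have := H 1 0 0; rewrite scale1r !addr0 scale1r => h.
by apply: (@addrI _ (f 0)); rewrite addr0 -{1}h.
Qed.

Lemma linD m n (f : 'M[C]_m -> 'M[C]_n) : linear f -> forall u v, f (u + v) = f u + f v.
Proof. by move=> H u v; have := H 1 u v; rewrite !scale1r. Qed.

Lemma linZ m n (f : 'M[C]_m -> 'M[C]_n) : linear f -> forall a u, f (a *: u) = a *: f u.
Proof. by move=> H a u; have := H a u 0; rewrite (lin0 H) !addr0. Qed.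

Definition Kmat n (l : 'M[C]_n -> C) : 'M[C]_n := \matrix_(j, i) l (delta_mx i j).

Lemma Kmat_tr n (l : 'M[C]_n -> C) :
  (forall u v, l (u + v) = l u + l v) -> (forall a u, l (a *: u) = a * l u) ->
  forall rho, l rho = \tr (Kmat l *m rho).
Proof.
move=> hD hZ rho.
have l0 : l 0 = 0 by have := hZ 0 0; rewrite scale0r mul0r.
rewrite {1}(matrix_sum_delta rho).
rewrite (big_morph l hD l0); under eq_bigr => i _ do rewrite (big_morph l hD l0).
rewrite /mxtrace exchange_big; apply: eq_bigr => i _.
by rewrite mxE; apply: eq_bigr => j _; rewrite hZ mxE mulrC.
Qed.


Lemma tr_mul_proj n (H : 'M[C]_n) (u : 'cV[C]_n) :
  \tr (H *m proj u) = (adj u *m H *m u) 0 0.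
Proof. by rewrite /proj mulmxA mxtrace_mulC mulmxA /mxtrace big_ord1. Qed.

Lemma tr_ge0 n (rho : 'M[C]_n) : psd rho -> 0 <= \tr rho.
Proof. by move=> h; apply: sumr_ge0 => i _; exact: psd_diag_ge0. Qed.

Lemma spectral_max n (K : 'M[C]_n) : (0 < n)%N ->
  exists u : 'cV[C]_n, unit_vec u /\
    forall rho, psd rho ->
      complex.Re (\tr (K *m rho)) <=
      complex.Re (\tr (K *m proj u)) * complex.Re (\tr rho).
Proof.
move=> hn.
set H := 2^-1 *: (K + adj K).
have hH : adj H = H.
  by rewrite /H adjZ adjD adjK fmorphV rmorph_nat addrC.
have hHherm : H \is hermsymmx.
  by apply/is_hermitianmxP; rewrite expr0 scale1r -{1}hH adjE map_trmx.
set P := spectralmx H; set D := spectral_diag H.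
have hP : P \is unitarymx := spectral_unitarymx H.
have hPinv : invmx P = adj P by rewrite invmx_unitary // adjE map_trmx.
have hPP : P *m adj P = 1%:M by rewrite -hPinv mulmxV // spectral_unit.
have hPP' : adj P *m P = 1%:M by rewrite -hPinv mulVmx // spectral_unit.
have hHD : H = adj P *m diag_mx D *m P.
  by rewrite -hPinv; apply/orthomx_spectralP/hermitian_normalmx.
have hDreal : forall i, D 0 i \is Num.real.
  by move: (hermitian_spectral_diag_real hHherm) => /mxOverP h i; exact: h.
have [i0 _ hmax] := @real_arg_maxP C 'I_n (Ordinal hn) predT (fun i => D 0 i) isT
  (fun i _ => hDreal i).
set u : 'cV[C]_n := adj P *m delta_mx i0 0.
have hHtr : forall rho, adj rho = rho ->
    ((complex.Re (\tr (K *m rho)))%:C)%C = \tr (H *m rho).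
  move=> rho hr; rewrite ReJ_add /H -scalemxAl mxtraceZ mulmxDl mxtraceD.
  rewrite -[in adj K *m rho]hr -adj_mul tr_adj mxtrace_mulC.
  by rewrite mulrC.
have hHtr2 : forall rho, \tr (H *m rho) = \sum_i D 0 i * (P *m rho *m adj P) i i.
  move=> rho; rewrite hHD -!mulmxA mxtrace_mulC -!mulmxA mul_diag_mx /mxtrace.
  by apply: eq_bigr => i _; rewrite mxE !mulmxA.
exists u; split.
  rewrite /unit_vec /u adj_mul adjK !mulmxA -(mulmxA _ P) hPP.
  by rewrite quad_delta mxE eqxx.
move=> rho hrho.
have hmu : ((complex.Re (\tr (K *m proj u)))%:C)%C = D 0 i0.
  rewrite hHtr; last by rewrite /proj adj_mul adjK.
  rewrite tr_mul_proj /u adj_mul adjK hHD !mulmxA -(mulmxA _ P) hPP mulmx1.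
  by rewrite -(mulmxA _ P) hPP mulmx1 quad_delta mxE eqxx mulr1n.
have htr : ((complex.Re (\tr rho))%:C)%C = \tr rho.
  by apply: RRe_real; apply: ger0_real; exact: tr_ge0.
rewrite -lecR cM hmu htr hHtr; last exact: hrho.1.
rewrite hHtr2.
have -> : \tr rho = \tr (P *m rho *m adj P).
  by rewrite mxtrace_mulC mulmxA hPP' mul1mx.
rewrite /mxtrace mulr_sumr; apply: ler_sum => i _.
apply: ler_wpM2r; first by apply: psd_diag_ge0; exact: psd_congr.
exact: hmax.
Qed.


Lemma Re1 : complex.Re (1 : C) = 1.
Proof. by []. Qed.

Lemma ReD (x y : C) : complex.Re (x + y) = complex.Re x + complex.Re y.
Proof. by case: x => a b; case: y. Qed.
Lemma ReN (x : C) : complex.Re (- x) = - complex.Re x.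
Proof. by case: x. Qed.
Lemma ReB (x y : C) : complex.Re (x - y) = complex.Re x - complex.Re y.
Proof. by rewrite ReD ReN. Qed.
Lemma ReM (x y : C) :
  complex.Re (x * y) = complex.Re x * complex.Re y - complex.Im x * complex.Im y.
Proof. by case: x => a b; case: y. Qed.
Lemma Re_cM (r : R) (x : C) : complex.Re ((r%:C)%C * x) = r * complex.Re x.
Proof. by rewrite ReM /= mul0r subr0. Qed.
Lemma Re_sum (I : finType) (P : pred I) (F : I -> C) :
  complex.Re (\sum_(i | P i) F i) = \sum_(i | P i) complex.Re (F i).
Proof. by apply: (big_morph _ ReD). Qed.
Lemma Im_ge0 (x : C) : 0 <= x -> complex.Im x = 0.
Proof. by case: x => a b; rewrite lecE /= => /andP[/eqP -> _]. Qed.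
Lemma Re_ge0 (x : C) : 0 <= x -> 0 <= complex.Re x.
Proof. by case: x => a b; rewrite lecE /= => /andP[_]. Qed.
Lemma cB (r s : R) : ((r - s)%:C = r%:C - s%:C)%C.
Proof. by apply/eqP; rewrite eq_complex /= oppr0 addr0 !eqxx. Qed.
Lemma normcR (r : R) : `|(r%:C)%C| = (`|r|%:C)%C.
Proof. by rewrite normc_def /= expr0n addr0 sqrtr_sqr. Qed.
Lemma Re_bool (b : bool) : complex.Re (b%:R : C) = b%:R.
Proof. by case: b. Qed.

Lemma mix_le (mu x y : R) : 0 <= mu -> mu <= 1 ->
  mu * x + (1 - mu) * y <= (x + y) / 2 + `|x - y| / 2.
Proof.
move=> h0 h1; case: (lerP 0 (x - y)) => h.
  rewrite ger0_norm //; nra.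
rewrite ltr0_norm //; nra.
Qed.

End Helpers.

Section Main.
Variable R : realType.
Local Notation C := R[i].
Variables (n m : nat) (Th0 Th1 : 'M[C]_n -> 'M[C]_m) (lam : R).
Hypotheses (h0 : is_channel Th0) (h1 : is_channel Th1).
Hypotheses (hl0 : 0 <= lam) (hl1 : lam <= 1) (hn : (0 < n)%N).

Definition Lmap (X : 'M[C]_n) : 'M[C]_m :=
  (lam%:C)%C *: Th0 X - ((1 - lam)%:C)%C *: Th1 X.

Definition xval (b : 'I_m) (X : 'M[C]_n) : R := complex.Re (Lmap X b b).

Lemma LmapE X b : Lmap X b b = (lam%:C)%C * Th0 X b b - ((1 - lam)%:C)%C * Th1 X b b.
Proof. by rewrite !mxE. Qed.

Lemma xvalE X b : xval b X = lam * complex.Re (Th0 X b b) - (1 - lam) * complex.Re (Th1 X b b).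
Proof. by rewrite /xval LmapE ReB !Re_cM. Qed.

Lemma Lmap_real X b : psd X -> Lmap X b b = ((xval b X)%:C)%C.
Proof.
move=> hX; rewrite xvalE LmapE [RHS]cB ![in RHS]cM.
rewrite (RRe_real (ger0_real (chan_diag_ge0 b h0 hX))).
by rewrite (RRe_real (ger0_real (chan_diag_ge0 b h1 hX))).
Qed.

Lemma tn_L X : psd X -> trace_norm (dephase (Lmap X)) = \sum_b `|xval b X|.
Proof.
move=> hX; rewrite tn_dephase; apply: eq_bigr => b _.
by rewrite Lmap_real // normcR.
Qed.

Lemma LmapD u v : Lmap (u + v) = Lmap u + Lmap v.
Proof.
rewrite /Lmap (linD h0.1) (linD h1.1) !scalerDr.
by rewrite opprD addrACA.
Qed.

Lemma LmapZ a u : Lmap (a *: u) = a *: Lmap u.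
Proof.
rewrite /Lmap (linZ h0.1) (linZ h1.1) scalerBr !scalerA.
by rewrite [_ * a]mulrC [((1 - lam)%:C)%C * a]mulrC.
Qed.

Definition phi (s : {ffun 'I_m -> bool}) (X : 'M[C]_n) : C :=
  \sum_b (-1) ^+ (s b) * Lmap X b b.

Lemma phi_tr s X : phi s X = \tr (Kmat (phi s) *m X).
Proof.
apply: Kmat_tr => [u v|a u].
  rewrite /phi -big_split /=; apply: eq_bigr => b _.
  by rewrite LmapD mxE mulrDr.
rewrite /phi mulr_sumr; apply: eq_bigr => b _.
by rewrite LmapZ mxE mulrCA.
Qed.

Lemma Re_phi s X : complex.Re (phi s X) = \sum_b (-1) ^+ (s b) * xval b X.
Proof.
rewrite Re_sum; apply: eq_bigr => b _.
by case: (s b); rewrite ?expr0 ?expr1 ?mul1r ?mulN1r ?ReN.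
Qed.

Lemma Re_phi_le s X : complex.Re (phi s X) <= \sum_b `|xval b X|.
Proof.
rewrite Re_phi; apply: ler_sum => b _.
case: (s b); rewrite ?expr0 ?expr1 ?mul1r ?mulN1r ?ler_norm //.
by rewrite -normrN ler_norm.
Qed.

Lemma Re_phi_eq X : complex.Re (phi [ffun b => xval b X < 0] X) = \sum_b `|xval b X|.
Proof.
rewrite Re_phi; apply: eq_bigr => b _; rewrite ffunE.
case: ltP => h; first by rewrite expr1 mulN1r ltr0_norm.
by rewrite expr0 mul1r ger0_norm.
Qed.

Definition gv (u : 'cV[C]_n) : R := \sum_b `|xval b (proj u)|.

Lemma Re_tr_ge0 (X : 'M[C]_n) : psd X -> 0 <= complex.Re (\tr X).
Proof. by move=> hX; apply: Re_ge0; exact: tr_ge0. Qed.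

Lemma exists_opt : exists psi0 : 'cV[C]_n, unit_vec psi0 /\
  forall X, psd X -> \sum_b `|xval b X| <= gv psi0 * complex.Re (\tr X).
Proof.
have : forall s : {ffun 'I_m -> bool}, exists u : 'cV[C]_n, unit_vec u /\
    forall rho, psd rho ->
      complex.Re (\tr (Kmat (phi s) *m rho)) <=
      complex.Re (\tr (Kmat (phi s) *m proj u)) * complex.Re (\tr rho).
  by move=> s; apply: spectral_max.
case/fin_all_exists => U hU.
pose s0 : {ffun 'I_m -> bool} := [ffun=> false].
have [ss _ hsmax] := @arg_maxP _ R _ s0 predT (fun s => gv (U s)) isT.
exists (U ss); split; first by case: (hU ss).
move=> X hX.
set s := [ffun b => xval b X < 0].
rewrite -Re_phi_eq phi_tr.
apply: (le_trans ((hU s).2 X hX)).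
apply: ler_wpM2r; first exact: Re_tr_ge0.
rewrite -phi_tr; apply: (le_trans (Re_phi_le _ _)).
exact: hsmax.
Qed.


Lemma Re_tr_diag k (M X : 'M[C]_k) : is_diag_mx M -> (forall p, complex.Im (M p p) = 0) ->
  complex.Re (\tr (M *m X)) = \sum_p complex.Re (M p p) * complex.Re (X p p).
Proof.
move=> hM hIm; rewrite /mxtrace Re_sum; apply: eq_bigr => p _.
rewrite mxE (bigD1 p) //= big1 ?addr0; first by rewrite ReM hIm mul0r subr0.
move=> q hq; have /is_diag_mxP hd := hM.
by rewrite hd ?mul0r // eq_sym.
Qed.

Lemma tr_chan_tens k (Phi : 'M[C]_n -> 'M[C]_m) (X : 'M[C]_(n * k)) :
  is_channel Phi -> \tr (tens_id Phi X) = \tr X.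
Proof.
move=> [_ [htp _]]; rewrite tr_tens tr_blk; apply: eq_bigr => c _; exact: htp.
Qed.

Lemma sum_a k (Phi : 'M[C]_n -> 'M[C]_m) (X : 'M[C]_(n * k)) :
  is_channel Phi -> \sum_p complex.Re (tens_id Phi X p p) = complex.Re (\tr X).
Proof. by move=> hP; rewrite -Re_sum -/(mxtrace _) tr_chan_tens. Qed.

Lemma success_le k (sigma : 'M[C]_(n * k)) (M0 M1 : 'M[C]_(m * k)) (g0 : R) :
  is_state sigma -> incoherent_povm M0 M1 ->
  (forall X, psd X -> \sum_b `|xval b X| <= g0 * complex.Re (\tr X)) ->
  success lam Th0 Th1 sigma M0 M1 <= 1 / 2 + 1 / 2 * g0.
Proof.
case=> hs htr [hM0 [hM1 [hd0 [hd1 hsum]]]] hB.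
have hM1E p : M1 p p = 1 - M0 p p.
  move/matrixP: hsum => /(_ p p); rewrite mxE [RHS]mxE eqxx mulr1n => <-.
  by rewrite addrC addrK.
have hIm0 p : complex.Im (M0 p p) = 0 by apply: Im_ge0; exact: psd_diag_ge0.
have hIm1 p : complex.Im (M1 p p) = 0 by apply: Im_ge0; exact: psd_diag_ge0.
set X0 := tens_id Th0 sigma; set X1 := tens_id Th1 sigma.
have E1 : \sum_p (lam * complex.Re (X0 p p) + (1 - lam) * complex.Re (X1 p p)) = 1.
  rewrite big_split /= -!mulr_sumr /X0 /X1 !sum_a // htr /=; lra.
have E2 : \sum_p `|lam * complex.Re (X0 p p) - (1 - lam) * complex.Re (X1 p p)| <= g0.
  rewrite sum_tens exchange_big /=.
  apply: (@le_trans _ _ (\sum_c g0 * complex.Re (\tr (blk sigma c c)))).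
    apply: ler_sum => c _.
    apply: (le_trans _ (hB _ (blk_psd c hs))); rewrite le_eqVlt; apply/orP; left; apply/eqP.
    by apply: eq_bigr => b _; rewrite /X0 /X1 !tens_id_diag xvalE.
  by rewrite -mulr_sumr -Re_sum -tr_blk htr /= mulr1.
rewrite /success (Re_tr_diag _ hd0 hIm0) (Re_tr_diag _ hd1 hIm1).
have -> : \sum_p complex.Re (M1 p p) * complex.Re (X1 p p) =
    \sum_p (1 - complex.Re (M0 p p)) * complex.Re (X1 p p).
  by apply: eq_bigr => p _; rewrite hM1E ReB.
rewrite !mulr_sumr -big_split /=.
apply: (@le_trans _ _ (\sum_p ((lam * complex.Re (X0 p p) + (1 - lam) * complex.Re (X1 p p)) / 2
   + `|lam * complex.Re (X0 p p) - (1 - lam) * complex.Re (X1 p p)| / 2))).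
  apply: ler_sum => p _.
  have hmu0 : 0 <= complex.Re (M0 p p) by apply: Re_ge0; exact: psd_diag_ge0.
  have hmu1 : complex.Re (M0 p p) <= 1.
    have := Re_ge0 (psd_diag_ge0 p hM1); rewrite hM1E ReB /= subr_ge0 //.
  have := mix_le (lam * complex.Re (X0 p p)) ((1 - lam) * complex.Re (X1 p p)) hmu0 hmu1.
  apply: le_trans; rewrite le_eqVlt; apply/orP; left; apply/eqP; ring.
rewrite big_split /= -!mulr_suml E1; lra.
Qed.


Definition cond (rho : 'M[C]_n) (p : 'I_(m * 1)) : bool := 0 <= xval (mxtens_unindex p).1 rho.
Definition Mopt0 rho : 'M[C]_(m * 1) := diag_mx (\row_p ((cond rho p)%:R : C)).
Definition Mopt1 rho : 'M[C]_(m * 1) := diag_mx (\row_p ((~~ cond rho p)%:R : C)).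

Lemma attain (rho : 'M[C]_n) : is_state rho ->
  is_state (lift1 rho) /\ incoherent_povm (Mopt0 rho) (Mopt1 rho) /\
  success lam Th0 Th1 (lift1 rho) (Mopt0 rho) (Mopt1 rho) =
    1 / 2 + 1 / 2 * \sum_b `|xval b rho|.
Proof.
case=> hr htr.
split; first by split; [exact: lift1_psd | rewrite tr_lift1].
split.
  split; first by apply: psd_diag => p; rewrite mxE ler0n.
  split; first by apply: psd_diag => p; rewrite mxE ler0n.
  split; first exact: diag_mx_is_diag.
  split; first exact: diag_mx_is_diag.
  apply/matrixP => i j; rewrite !mxE -mulrnDl.
  by case: (cond rho i); rewrite /= ?add0r ?addr0.
have hIm0 p : complex.Im (Mopt0 rho p p) = 0.
  by rewrite !mxE eqxx mulr1n; case: (cond rho p).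
have hIm1 p : complex.Im (Mopt1 rho p p) = 0.
  by rewrite !mxE eqxx mulr1n; case: (cond rho p).
have E1 : \sum_b (lam * complex.Re (Th0 rho b b) + (1 - lam) * complex.Re (Th1 rho b b)) = 1.
  rewrite big_split /= -!mulr_sumr -!Re_sum -/(mxtrace _) -/(mxtrace (Th1 rho)).
  rewrite h0.2.1 h1.2.1 htr /=; lra.
rewrite /success (Re_tr_diag _ (diag_mx_is_diag _) hIm0) (Re_tr_diag _ (diag_mx_is_diag _) hIm1).
rewrite !mulr_sumr -big_split /= sum_tens1.
have -> : 1 / 2 + \sum_b 1 / 2 * `|xval b rho| =
    \sum_b ((lam * complex.Re (Th0 rho b b) + (1 - lam) * complex.Re (Th1 rho b b)) / 2
      + `|xval b rho| / 2).
  by rewrite big_split /= -!mulr_suml -mulr_sumr E1; lra.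
apply: eq_bigr => b _.
rewrite !tens_id_diag blk_lift1 /Mopt0 /Mopt1 !mxE eqxx !mulr1n /cond mxtens_indexK /=.
case: (lerP 0 (xval b rho)) => h /=.
  by rewrite ger0_norm // xvalE; field.
by rewrite ltr0_norm // xvalE; field.
Qed.

End Main.

Theorem proposition17 (R : realType) (dA dB : nat) (hA : (0 < dA)%N) (hB : (0 < dB)%N)
  (Theta0 Theta1 : 'M[R[i]]_dA -> 'M[R[i]]_dB) (lam : R)
  (h0 : is_channel Theta0) (h1 : is_channel Theta1)
  (hlam0 : 0 <= lam) (hlam1 : lam <= 1) :
  let T := fun X : 'M[R[i]]_dA =>
             dephase ((lam%:C)%C *: Theta0 X - ((1 - lam)%:C)%C *: Theta1 X) in
  exists psi0 : 'cV[R[i]]_dA,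
    unit_vec psi0 /\
    (forall psi : 'cV[R[i]]_dA, unit_vec psi ->
        trace_norm (T (proj psi)) <= trace_norm (T (proj psi0))) /\
    Pc lam Theta0 Theta1 = 1 / 2 + 1 / 2 * trace_norm (T (proj psi0)).
Proof.
move=> T.
have [psi0 [hu hBd]] := exists_opt lam h0 h1 hA.
have tnT : forall X, psd X ->
    trace_norm (T X) = \sum_b `|xval Theta0 Theta1 lam b X| := fun X hX => tn_L lam h0 h1 hX.
have hst : forall psi : 'cV[R[i]]_dA, unit_vec psi -> is_state (proj psi).
  by move=> psi hpsi; split; [exact: psd_proj | rewrite tr_proj; exact: hpsi].
exists psi0; split; first exact: hu.
split.
  move=> psi hpsi.
  have e1 := tnT _ (psd_proj psi); have e2 := tnT _ (psd_proj psi0).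
  apply: (@le_trans _ _ (\sum_b `|xval Theta0 Theta1 lam b (proj psi)|)).
    by rewrite e1.
  apply: (@le_trans _ _ (gv Theta0 Theta1 lam psi0)); last by rewrite e2.
  have := hBd _ (psd_proj psi).
  by rewrite tr_proj (hpsi : (adj psi *m psi) 0 0 = 1) Re1 mulr1.
rewrite (tnT _ (psd_proj psi0)) -/(gv Theta0 Theta1 lam psi0).
set v0 := 1 / 2 + 1 / 2 * gv Theta0 Theta1 lam psi0.
rewrite /Pc; set S := (X in sup X).
have hmem : S v0.
  have [hs [hp he]] := attain lam h0 h1 (hst _ hu).
  rewrite /S /=; exists 1%N, (lift1 (proj psi0)), (Mopt0 Theta0 Theta1 lam (proj psi0)),
    (Mopt1 Theta0 Theta1 lam (proj psi0)).
  split; first exact: hs.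
  split; first exact: hp.
  by rewrite he.
have hub : ubound S v0.
  move=> p [k [sigma [M0 [M1 [hs [hp ->]]]]]].
  exact: (success_le h0 h1 hs hp hBd).
apply/le_anti/andP; split.
  by apply: ge_sup => //; exists v0.
apply: (sup_upper_bound _ hmem).
by split; [exists v0 | exists v0].
Qed.
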